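(* Assume ${\rm ZFC}$. If the principle $(\lrcorner)$ holds, then $2^{\aleph_0}>\aleph_1$.
   Context: A map $m:[X]^{<\omega}\to[X]^{<\omega}$ (where $[X]^{<\omega}$ is the set of finite subsets of $X$) is called monotone if $a\subseteq m(a)$ for every finite $a\subseteq X$. The principle $(\lrcorner)$ is the statement: for every sequence $\langle f_\alpha:\alpha<\omega_1\rangle$ of functions from $\omega_1$ to $\omega_1$, every finite subset $F$ of $\omega_1$ and every monotone map $m:[\omega_1]^{<\omega}\to[\omega_1]^{<\omega}$, there exists a function $g:\omega_1\to\omega_1$ such that $F\cap\mathrm{ran}(g)=\emptyset$ and for every $a\in[\omega_1]^{<\omega}$ there exists $b\in[\omega_1]^{<\omega}$ with $a\subseteq b$ such that $\{\beta<\omega_1: f_\alpha(\beta)=g(\beta)\}\subseteq m(b)$ for all $\alpha\in m(b)$. *)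

(* Defs.v *)
From mathcomp Require Import all_boot.
From mathcomp Require Import finmap.
Set Implicit Arguments. Unset Strict Implicit. Unset Printing Implicit Defensive.
Local Open Scope fset_scope.

Definition is_omega1 (W : Type) (lt : W -> W -> Prop) : Prop :=
  (forall x, ~ lt x x) /\
  (forall x y z, lt x y -> lt y z -> lt x z) /\
  (forall x y, lt x y \/ x = y \/ lt y x) /\
  well_founded lt /\
  ~ (exists f : W -> nat, injective f) /\
  (forall x : W, exists f : W -> nat,
        forall y z, lt y x -> lt z x -> f y = f z -> y = z).

Definition monotone_fmap (W : choiceType) (m : {fset W} -> {fset W}) : Prop :=
  forall a : {fset W}, fsubset a (m a).

Definition principle_corner (W : choiceType) : Prop :=
  forall (f : W -> W -> W) (F : {fset W}) (m : {fset W} -> {fset W}),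
    monotone_fmap m ->
    exists g : W -> W,
      (forall beta : W, g beta \notin F) /\
      (forall a : {fset W}, exists b : {fset W},
         fsubset a b /\
         forall alpha : W, alpha \in m b ->
           forall beta : W, f alpha beta = g beta -> beta \in m b).

Definition continuum_gt (W : Type) : Prop :=
  (exists h : W -> (nat -> bool), injective h) /\
  ~ (exists h : (nat -> bool) -> W, injective h).

(* Main.v *)
Require Import Defs.
From mathcomp Require Import all_boot.
From mathcomp Require Import finmap.
From Stdlib Require Import ClassicalEpsilon FunctionalExtensionality.
From Stdlib Require Cantor.

Local Open Scope fset_scope.

Definition bdec (P : Prop) : bool :=
  if excluded_middle_informative P then true else false.

Lemma bdecP (P : Prop) : bdec P = true <-> P.
Proof. rewrite /bdec; case: excluded_middle_informative => //. Qed.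

Section Part1.
Variables (W : Type) (lt : W -> W -> Prop).
Hypothesis irr : forall x, ~ lt x x.
Hypothesis trans : forall x y z, lt x y -> lt y z -> lt x z.
Hypothesis wf : well_founded lt.
Variable fx : W -> W -> nat.
Hypothesis fxinj : forall x y z, lt y x -> lt z x -> fx x y = fx x z -> y = z.

Definition rel (x : W) (i k : nat) : Prop :=
  exists y z, lt y x /\ lt z x /\ fx x y = i /\ fx x z = k /\ (lt y z \/ y = z).

Lemma no_embed x x' : lt x x' ->
  (forall i k, rel x i k <-> rel x' i k) -> False.
Proof.
move=> xx' Hr.
have key : forall z, lt z x' -> forall y, lt y x -> fx x y = fx x' z -> lt y z -> False.
  intro z; induction (wf z) as [z _ IH] => zx' y yx Hf yz.
  have yx' : lt y x' by apply: trans yx xx'.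
  have : rel x' (fx x' y) (fx x' z) by exists y, z; repeat split => //; left.
  move/Hr => [a [b [ax [bx [Ha [Hb Hab]]]]]].
  have by' : b = y by apply: (fxinj _ _ _ bx yx); rewrite Hb Hf.
  subst b.
  case: Hab => [ay|ay].
  - by apply: (IH y yz yx' a ax Ha ay).
  - move: ay Ha => -> Ha. have E : y = z by apply: (fxinj _ _ _ yx' zx'); rewrite -Ha Hf.
    by move: yz; rewrite E; apply: irr.
have : rel x' (fx x' x) (fx x' x) by exists x, x; repeat split => //; right.
move/Hr => [a [b [ax [bx [Ha [Hb Hab]]]]]].
exact: (key x xx' a ax Ha ax).
Qed.

Definition jcode (x : W) : nat -> bool :=
  fun m => bdec (rel x (Cantor.of_nat m).1 (Cantor.of_nat m).2).

Lemma jcode_rel x i k : jcode x (Cantor.to_nat (i, k)) = true <-> rel x i k.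
Proof. by rewrite /jcode Cantor.cancel_of_to bdecP. Qed.

Hypothesis tri : forall x y, lt x y \/ x = y \/ lt y x.

Lemma jcode_inj : injective jcode.
Proof.
move=> x x' E.
have Hr : forall i k, rel x i k <-> rel x' i k.
  by move=> i k; rewrite -!jcode_rel E.
case: (tri x x') => [l|[//|l]]; exfalso.
- exact: (no_embed _ _ l Hr).
- apply: (no_embed _ _ l) => i k; split; apply Hr.
Qed.
End Part1.

Theorem mainTheorem1 (W : choiceType) (lt : W -> W -> Prop) :
  is_omega1 lt -> principle_corner W -> continuum_gt W.
Proof.
move=> [irr [trans [tri [wf [nocount segs]]]]] Hp.
pose fx := fun x => proj1_sig (constructive_indefinite_description _ (segs x)).
have fxinj : forall x y z, lt y x -> lt z x -> fx x y = fx x z -> y = z.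
  by move=> x; exact: (proj2_sig (constructive_indefinite_description _ (segs x))).
pose j := @jcode W lt fx.
have jinj : injective j by apply: (@jcode_inj W lt irr trans wf fx fxinj tri).
split; first by exists j.
move=> [h hinj].
pose e := fun n : nat => h (fun k => Nat.eqb k n).
have einj : injective e.
  move=> n n' /hinj E.
  have := f_equal (fun f => f n) E => /=.
  rewrite PeanoNat.Nat.eqb_refl => /esym /PeanoNat.Nat.eqb_eq //.
pose P := fun alpha beta y => exists n c, beta = e n /\ h c = alpha /\
            j y = fun k => c (Cantor.to_nat (n, k)).
pose f := fun alpha beta => epsilon (inhabits beta) (P alpha beta).
have [g [_ Hg]] := Hp f fset0 id (fun a => fsubset_refl a).
pose c0 := fun m => j (g (e (Cantor.of_nat m).1)) (Cantor.of_nat m).2.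
pose alpha0 := h c0.
have agree : forall n, f alpha0 (e n) = g (e n).
  move=> n.
  have Hex : P alpha0 (e n) (g (e n)).
    exists n, c0; split => //; split => //.
    by apply: functional_extensionality => k; rewrite /c0 Cantor.cancel_of_to.
  have := epsilon_spec (inhabits (e n)) (P alpha0 (e n)) (ex_intro _ _ Hex).
  move=> [n' [c' [En [Hc Ej]]]].
  move: En => /einj En; subst n'.
  move: Hc => /hinj Hc; subst c'.
  apply: jinj; rewrite /f Ej; apply: functional_extensionality => k.
  by rewrite /c0 Cantor.cancel_of_to.
have [b [sab Hb]] := Hg [fset alpha0].
have a0b : alpha0 \in b by apply: (fsubsetP sab); rewrite inE.
have inb : forall n, e n \in b by move=> n; apply: (Hb alpha0 a0b); exact: agree.
have : size (map e (iota 0 (size b).+1)) <= size b.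
  apply: uniq_leq_size.
    rewrite map_inj_uniq ?iota_uniq //.
  by move=> x /mapP [n _ ->].
by rewrite size_map size_iota ltnn.
Qed.
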